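(* Let $R$ be a commutative elementary divisor domain, let $E,\Phi$ be $n\times n$ $d$-matrices, and let $A=P_A^{-1}EQ_A^{-1}$ with $P_A,Q_A\in GL_n(R)$. Every $n\times n$ matrix with Smith form $\Phi$ (i.e. equivalent to $\Phi$) is a left divisor of $A$ if and only if $\Phi\mid E$ and $\mathbf L(E,\Phi)=GL_n(R)$.
   Context: Elementary divisor domain: commutative integral domain over which every matrix is equivalent ($PAQ$, $P,Q$ invertible) to a $d$-matrix (diagonal $\mathrm{diag}(\varphi_1,\dots)$ with $\varphi_i\mid\varphi_{i+1}$). For $E=\mathrm{diag}(\varepsilon_1,\dots,\varepsilon_k,0,\dots,0)$, $\Phi=\mathrm{diag}(\varphi_1,\dots,\varphi_t,0,\dots,0)$ with $\varepsilon_k,\varphi_t\ne0$, $\Phi\mid E$ means $k\le t$ and $\varphi_i\mid\varepsilon_i$ for $i\le k$. $\mathbf L(E,\Phi)=\{L\in GL_n(R):\exists S\in M_n(R),\ LE=\Phi S\}$. $B$ is a left divisor of $A$ if $A=BC$ for some matrix $C$. *)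

(* Defs.v *)
From mathcomp Require Import all_boot all_algebra.
Set Implicit Arguments. Unset Strict Implicit. Unset Printing Implicit Defensive.
Import GRing.Theory.
Local Open Scope ring_scope.

Definition rdvd (R : comRingType) (a b : R) : Prop := exists c : R, b = a * c.

(* d-matrix: diagonal matrix diag(phi_1, phi_2, ...) with phi_i | phi_(i+1). *)
Definition is_dmx (R : comRingType) (m n : nat) (D : 'M[R]_(m, n)) : Prop :=
  (forall (i : 'I_m) (j : 'I_n), (i : nat) <> (j : nat) -> D i j = 0) /\
  (forall (i : 'I_m) (j : 'I_n) (i' : 'I_m) (j' : 'I_n),
      (i : nat) = j -> (i' : nat) = j' -> (i' : nat) = i.+1 ->
      rdvd (D i j) (D i' j')).

Definition elementary_divisor_domain (R : idomainType) : Prop :=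
  forall (m n : nat) (A : 'M[R]_(m, n)),
    exists (P : 'M[R]_m) (Q : 'M[R]_n),
      P \in unitmx /\ Q \in unitmx /\ is_dmx (P *m A *m Q).

Definition mx_equiv (R : comUnitRingType) (n : nat) (B A : 'M[R]_n) : Prop :=
  exists P Q : 'M[R]_n, P \in unitmx /\ Q \in unitmx /\ B = P *m A *m Q.

Definition left_divisor (R : ringType) (n : nat) (B A : 'M[R]_n) : Prop :=
  exists C : 'M[R]_n, A = B *m C.

Definition nz_diag (R : ringType) (n : nat) (D : 'M[R]_n) : nat :=
  #|[pred i : 'I_n | D i i != 0]|.

(* Phi | E for d-matrices E = diag(eps_1..eps_k,0..), Phi = diag(phi_1..phi_t,0..):
   k <= t and phi_i | eps_i for i <= k. *)
Definition dmx_dvd (R : comRingType) (n : nat) (Phi E : 'M[R]_n) : Prop :=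
  (nz_diag E <= nz_diag Phi)%N /\
  (forall i : 'I_n, (i < nz_diag E)%N -> rdvd (Phi i i) (E i i)).

Definition Lset (R : comUnitRingType) (n : nat) (E Phi : 'M[R]_n) : 'M[R]_n -> Prop :=
  fun L => L \in unitmx /\ exists S : 'M[R]_n, L *m E = Phi *m S.

(* Main.v *)
Require Import Defs.
From mathcomp Require Import all_boot all_algebra.
Import GRing.Theory.
Local Open Scope ring_scope.

Theorem theorem5p3 (R : idomainType) (HR : elementary_divisor_domain R)
  (n : nat) (E Phi PA QA : 'M[R]_n)
  (hE : is_dmx E) (hPhi : is_dmx Phi)
  (hPA : PA \in unitmx) (hQA : QA \in unitmx) :
  let A := invmx PA *m E *m invmx QA in
  (forall B : 'M[R]_n, mx_equiv B Phi -> left_divisor B A) <->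
  (dmx_dvd Phi E /\ (forall L : 'M[R]_n, Lset E Phi L <-> L \in unitmx)).
Proof.
move=> A; split.
- move=> H.
  have HL : forall L : 'M[R]_n, L \in unitmx -> exists S, L *m E = Phi *m S.
    move=> L HLu.
    have HU : L *m PA \in unitmx by rewrite unitmx_mul HLu hPA.
    have [C HC] : left_divisor (invmx (L *m PA) *m Phi) A.
      apply: H; exists (invmx (L *m PA)), 1%:M; split; first by rewrite unitmx_inv.
      by split; [rewrite unitmx1 | rewrite mulmx1].
    exists (C *m QA).
    have -> : L *m E = L *m PA *m A *m QA.
      by rewrite /A !mulmxA -(mulmxA L PA) mulmxV // mulmx1 -(mulmxA _ (invmx QA)) mulVmx // mulmx1.
    by rewrite HC !mulmxA mulmxV // mul1mx.
  split; last first.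
    by move=> L; split; [case | move=> Hu; split => //; exact: HL].
  have [S HS] := HL 1%:M (@unitmx1 _ _).
  rewrite mul1mx in HS.
  have Hd : forall i : 'I_n, E i i = Phi i i * S i i.
    move=> i; rewrite HS !mxE (bigD1 i) //= big1 => [|k Hk]; first by rewrite addr0.
    rewrite hPhi.1 ?mul0r // => Hik; move: Hk.
    by rewrite (val_inj Hik) eqxx.
  split.
    rewrite /nz_diag; apply: subset_leq_card; apply/subsetP => i.
    rewrite !inE Hd; apply: contraNneq => ->; by rewrite mul0r.
  by move=> i _; exists (S i i).
- move=> [_ HL] B [P [Q [HP [HQ ->]]]].
  have HU : invmx P *m invmx PA \in unitmx by rewrite unitmx_mul !unitmx_inv HP hPA.
  have [_ [S HS]] := (proj2 (HL _)) HU.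
  exists (invmx Q *m S *m invmx QA).
  rewrite !mulmxA -(mulmxA _ Q) mulmxV // mulmx1 -(mulmxA P Phi S) -HS.
  by rewrite !mulmxA mulmxV // mul1mx.
Qed.
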